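(* Let $(W,\mathrm d)$ and $(W_h,\mathrm d_h)$ be Hilbert complexes, with morphisms $i_h\colon W_h\to W$ and $\pi_h\colon W\to W_h$ such that $\pi_h^k\circ i_h^k=\mathrm{id}_{W_h^k}$ for each $k$. Suppose that for all $k$, \[\|q-i_h^k\pi_h^kq\|<\|q\|\quad\text{for all } q\in\mathfrak H^k,\ q\neq 0.\] Then the map induced by $\pi_h$ on reduced cohomology, $[z]\mapsto[\pi_hz]$, is an isomorphism $\mathfrak Z^k/\overline{\mathfrak B^k}\to\mathfrak Z_h^k/\overline{\mathfrak B_h^k}$ for each $k$ (and hence so is the map induced by $i_h$, its inverse).
   Context: A Hilbert complex $(W,\mathrm d)$ is a sequence of Hilbert spaces $W^k$ together with closed, densely defined (possibly unbounded) linear maps $\mathrm d^k\colon V^k\subset W^k\to V^{k+1}\subset W^{k+1}$ satisfying $\mathrm d^k\circ\mathrm d^{k-1}=0$. A morphism $f\colon(W,\mathrm d)\to(W',\mathrm d')$ is a sequence of bounded linear maps $f^k\colon W^k\to W'^k$ with $f^kV^k\subset V'^k$ and $\mathrm d'^kf^k=f^{k+1}\mathrm d^k$ on $V^k$. For $(W,\mathrm d)$: $\mathfrak Z^k=\ker\mathrm d^k$, $\mathfrak B^k=\mathrm d^{k-1}V^{k-1}$, the harmonic space is $\mathfrak H^k=\mathfrak Z^k\cap(\mathfrak B^k)^{\perp}$ (orthogonal complement in $W^k$), and the reduced cohomology space is $\mathfrak Z^k/\overline{\mathfrak B^k}$; similarly $\mathfrak Z_h^k,\mathfrak B_h^k$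 for $(W_h,\mathrm d_h)$. Norms $\|\cdot\|$ are those of $W^k$. *)

(* Defs.v *)
From HB Require Import structures.
From mathcomp Require Import all_boot all_order all_algebra.
From mathcomp Require Import all_classical all_reals all_analysis.
Unset Strict Implicit. Unset Printing Implicit Defensive.
Import Order.TTheory GRing.Theory Num.Theory.
Import numFieldNormedType.Exports.
Local Open Scope classical_set_scope.
Local Open Scope ring_scope.

(* ip is an inner product on V inducing the norm of V:
   symmetric, linear in the first argument, and |x| = sqrt <x,x>
   (positive definiteness follows from the norm axioms). *)
Definition inner_product (R : realType) (V : normedModType R)
    (ip : V -> V -> R) : Prop :=
  (forall x y, ip x y = ip y x) /\
  (forall (a : R) x y z, ip (a *: x + y) z = a * ip x z + ip y z) /\
  (forall x, `|x| = Num.sqrt (ip x x)).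

(* W k is a (real) Hilbert space
   (complete normed space whose norm comes from the inner product ip k);
   d k is an unbounded linear operator with domain V k ⊂ W k, modelled as
   a total function whose values off V k are irrelevant. *)
Record hilbert_complex (R : realType) := HilbertComplex {
  hc_space : nat -> completeNormedModType R;
  hc_ip : forall k, hc_space k -> hc_space k -> R;
  hc_ipP : forall k, @inner_product R (hc_space k) (hc_ip k);
  hc_dom : forall k, set (hc_space k);
  hc_d : forall k, hc_space k -> hc_space k.+1;
  hc_dom0 : forall k, hc_dom k 0;
  hc_domL : forall k (a : R) x y, hc_dom k x -> hc_dom k y ->
      hc_dom k (a *: x + y);
  hc_dlin : forall k (a : R) x y, hc_dom k x -> hc_dom k y ->
      hc_d k (a *: x + y) = a *: hc_d k x + hc_d k y;
  hc_dense : forall k, closure (hc_dom k) = setT;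
  hc_closed : forall k,
      closed [set p : hc_space k * hc_space k.+1 | hc_dom k p.1 /\ hc_d k p.1 = p.2];
  hc_dmap : forall k x, hc_dom k x -> hc_dom k.+1 (hc_d k x);
  hc_dd : forall k x, hc_dom k x -> hc_d k.+1 (hc_d k x) = 0
}.
Arguments hc_space {R} h k.
Arguments hc_ip {R} h k.
Arguments hc_dom {R} h k.
Arguments hc_d {R} h k.

Section HC.
Variable R : realType.

Definition hc_morphism (C C' : hilbert_complex R)
    (f : forall k, hc_space C k -> hc_space C' k) : Prop :=
  forall k,
    (forall (a : R) x y, f k (a *: x + y) = a *: f k x + f k y) /\
    continuous (f k) /\
    (forall x, hc_dom C k x -> hc_dom C' k (f k x)) /\
    (forall x, hc_dom C k x -> hc_d C' k (f k x) = f k.+1 (hc_d C k x)).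

Definition hc_cocycles (C : hilbert_complex R) k : set (hc_space C k) :=
  [set x | hc_dom C k x /\ hc_d C k x = 0].

Definition hc_coboundaries (C : hilbert_complex R) k : set (hc_space C k) :=
  match k return set (hc_space C k) with
  | 0 => [set 0]
  | k'.+1 => hc_d C k' @` hc_dom C k'
  end.

Definition hc_harmonic (C : hilbert_complex R) k : set (hc_space C k) :=
  [set q | hc_cocycles C k q /\
           forall b, hc_coboundaries C k b -> hc_ip C k q b = 0].

(* Reduced cohomology Z^k / closure(B^k): z1 and z2 in Z^k represent the
   same class iff z1 - z2 ∈ closure(B^k).  The map [z] ↦ [f z] induced by
   f : W^k -> W'^k is
   - well defined: f Z^k ⊂ Z'^k and f (closure B^k) ⊂ closure B'^k,
   - injective: f z ∈ closure B'^k implies z ∈ closure B^k (z ∈ Z^k),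
   - surjective: every class of Z'^k contains some f z, z ∈ Z^k.
   (It is linear automatically since f is.) *)
Definition induces_reduced_cohomology_iso (C C' : hilbert_complex R) k
    (f : hc_space C k -> hc_space C' k) : Prop :=
  (forall z, hc_cocycles C k z -> hc_cocycles C' k (f z)) /\
  (forall b, closure (hc_coboundaries C k) b -> closure (hc_coboundaries C' k) (f b)) /\
  (forall z, hc_cocycles C k z -> closure (hc_coboundaries C' k) (f z) ->
             closure (hc_coboundaries C k) z) /\
  (forall z', hc_cocycles C' k z' ->
     exists2 z, hc_cocycles C k z & closure (hc_coboundaries C' k) (z' - f z)).

End HC.

(* Main.v *)
Require Import Defs.
From HB Require Import structures.
From mathcomp Require Import all_boot all_order all_algebra.
From mathcomp Require Import all_classical all_reals all_analysis.
From mathcomp Require Import ring lra.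
Import Order.TTheory GRing.Theory Num.Theory.
Import numFieldNormedType.Exports.
Local Open Scope classical_set_scope.
Local Open Scope ring_scope.
Set Implicit Arguments.

Section IP.
Variables (R : realType) (V : normedModType R) (ip : V -> V -> R).
Hypothesis H : @inner_product R V ip.

Lemma ip_sym x y : ip x y = ip y x. Proof. by case: H. Qed.
Lemma ip_lin a x y z : ip (a *: x + y) z = a * ip x z + ip y z.
Proof. by case: H => _ []. Qed.
Lemma ip_norm x : `|x| = Num.sqrt (ip x x). Proof. by case: H => _ []. Qed.

Lemma ip0l z : ip 0 z = 0.
Proof.
have := ip_lin 1 0 0 z; rewrite scaler0 addr0 mul1r => h.
lra.
Qed.
Lemma ipDl x y z : ip (x + y) z = ip x z + ip y z.
Proof. by rewrite -[x]scale1r ip_lin mul1r scale1r. Qed.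
Lemma ipNl x z : ip (- x) z = - ip x z.
Proof. by rewrite -[- x]addr0 -scaleN1r ip_lin ip0l addr0 mulN1r. Qed.
Lemma ipBl x y z : ip (x - y) z = ip x z - ip y z.
Proof. by rewrite ipDl ipNl. Qed.
Lemma ipZl a x z : ip (a *: x) z = a * ip x z.
Proof. by rewrite -[a *: x]addr0 ip_lin ip0l addr0. Qed.
Lemma ipDr x y z : ip z (x + y) = ip z x + ip z y.
Proof. by rewrite ip_sym ipDl !(ip_sym z). Qed.
Lemma ipBr x y z : ip z (x - y) = ip z x - ip z y.
Proof. by rewrite ip_sym ipBl !(ip_sym z). Qed.
Lemma ipZr a x z : ip z (a *: x) = a * ip z x.
Proof. by rewrite ip_sym ipZl ip_sym. Qed.

Lemma ip_ge0 x : 0 <= ip x x.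
Proof.
rewrite leNgt; apply/negP => hlt.
have : `|x| = 0 by rewrite ip_norm; apply/eqP; rewrite sqrtr_eq0 ltW.
move/eqP; rewrite normr_eq0 => /eqP x0.
by move: hlt; rewrite x0 ip0l ltxx.
Qed.

Lemma normsq x : `|x| ^+ 2 = ip x x.
Proof. by rewrite ip_norm sqr_sqrtr // ip_ge0. Qed.

Lemma normB_sq x y : `|x - y| ^+ 2 = `|x| ^+ 2 - 2 * ip x y + `|y| ^+ 2.
Proof. rewrite !normsq ipBl !ipBr (ip_sym y x); ring. Qed.
Lemma normD_sq x y : `|x + y| ^+ 2 = `|x| ^+ 2 + 2 * ip x y + `|y| ^+ 2.
Proof. rewrite !normsq ipDl !ipDr (ip_sym y x); ring. Qed.

End IP.


Lemma cl_map (S T : topologicalType) (f : S -> T) (A : set S) (C : set T) :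
  continuous f -> closed C -> (forall a, A a -> C (f a)) ->
  forall a, closure A a -> C (f a).
Proof.
move=> cf cC hA a ha.
have cP : closed (f @^-1` C) by move/continuous_closedP : cf; apply.
have : closure A `<=` f @^-1` C.
  by rewrite [X in _ `<=` X](closure_id _).1 //; apply: closureS.
by apply.
Qed.

Lemma cl_map2 (S T : topologicalType) (f : S -> T) (A : set S) (C : set T) :
  continuous f -> (forall a, A a -> C (f a)) ->
  forall a, closure A a -> closure C (f a).
Proof.
move=> cf hA; apply: cl_map => //; first exact: closed_closure.
by move=> a /hA; apply: subset_closure.
Qed.

Section Sub.
Variables (R : realType) (V : normedModType R).

Lemma cl_sub (S : set V) : (forall x y, S x -> S y -> S (x - y)) ->
  forall x y, closure S x -> closure S y -> closure S (x - y).
Proof.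
move=> hS x y hx hy.
have h1 : forall s, S s -> closure S (x - s).
  move=> s hs.
  apply: (@cl_map2 _ _ (fun u => u - s) S) hx.
  - by move=> u; apply: cvgB; [exact: cvg_id | exact: cvg_cst].
  - by move=> u hu; apply: hS.
apply: (@cl_map _ _ (fun u => x - u) S (closure S)) hy.
- by move=> u; apply: cvgB; [exact: cvg_cst | exact: cvg_id].
- exact: closed_closure.
- exact: h1.
Qed.

End Sub.


Section Proj.
Variables (R : realType) (V : completeNormedModType R) (ip : V -> V -> R).
Hypothesis H : @inner_product R V ip.
Variable S : set V.
Hypothesis S0 : S 0.
Hypothesis SL : forall (a : R) x y, S x -> S y -> S (a *: x + y).

Lemma projection z : exists2 b, closure S b & forall s, S s -> ip (z - b) s = 0.
Proof.
pose E := [set `|z - s| | s in S].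
have lbE : lbound E 0 by move=> _ [s _ <-]; exact: normr_ge0.
have hE : has_inf E by split; [exists `|z - 0|; exists 0 | exists 0].
set d := inf E.
have d0 : 0 <= d by apply: lb_le_inf => //; case: hE.
have dle : forall s, S s -> d <= `|z - s|.
  by move=> s hs; apply: ge_inf; [exists 0 | exists s].
pose e (n : nat) : R := n.+1%:R^-1.
have e0 : forall n, 0 < e n by move=> n; rewrite /e invr_gt0 ltr0n.
have e1 : forall n, e n <= 1 by move=> n; rewrite /e invf_le1 ?ler1n ?ltr0n.
have emon : forall n m, (n <= m)%N -> e m <= e n.
  by move=> n m nm; rewrite /e lef_pV2 ?posrE ?ltr0n // ler_nat ltnS.
have : forall n, exists s, S s /\ `|z - s| < d + e n.
  move=> n; have [_ [s hs <-] hlt] := inf_adherent (e0 n) hE.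
  by exists s.
case/choice => f hf.
have Sm : forall x y, S x -> S y -> S (2^-1 *: (x + y)).
  move=> x y hx hy; rewrite scalerDr; apply: SL => //.
  by rewrite -[_ *: y]addr0; apply: SL.
have bound : forall n m, `|f n - f m| ^+ 2 <= (4 * d + 2) * (e n + e m).
  move=> n m.
  have [hn un] := hf n; have [hm um] := hf m.
  have dmid := dle _ (Sm _ _ hn hm).
  have par := normB_sq H (z - f n) (z - f m).
  have par2 := normD_sq H (z - f n) (z - f m).
  set u := z - f n in par par2 un; set v := z - f m in par par2 um.
  set w := z - 2^-1 *: (f n + f m) in dmid.
  have euv : u + v = 2 *: w.
    rewrite /u /v /w scalerBr scalerA mulfV ?pnatr_eq0 // scale1r.
    by rewrite scaler_nat mulr2n addrACA opprD.
  have nuv : `|u + v| = 2 * `|w| by rewrite euv normrZ ger0_norm.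
  have euv2 : u - v = f m - f n.
    by rewrite /u /v opprB addrC addrA subrK.
  rewrite distrC -euv2.
  rewrite nuv in par2.
  have u0 := normr_ge0 u; have v0 := normr_ge0 v.
  have hu : `|u| ^+ 2 <= d ^+ 2 + (2 * d + 1) * e n.
    have : `|u| ^+ 2 <= (d + e n) ^+ 2 by rewrite ler_pXn2r ?ltW // nnegrE; lra.
    have := e1 n; have := e0 n; nra.
  have hv : `|v| ^+ 2 <= d ^+ 2 + (2 * d + 1) * e m.
    have : `|v| ^+ 2 <= (d + e m) ^+ 2 by rewrite ler_pXn2r ?ltW // nnegrE; lra.
    have := e1 m; have := e0 m; nra.
  have hw : d ^+ 2 <= `|w| ^+ 2 by rewrite ler_pXn2r // nnegrE.
  rewrite par; lra.
have K0 : 0 < 4 * d + 2 by lra.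
have cau : cauchy_ex (f @ \oo).
  move=> eps eps0.
  have h : 0 < eps ^+ 2 / (2 * (4 * d + 2)).
    by rewrite divr_gt0 ?exprn_gt0 // mulr_gt0.
  have [N _ /(_ N)/(_ (leqnn _)) hN] := near_infty_natSinv_lt (PosNum h).
  exists (f N); exists N => // n /= hn.
  rewrite -ball_normE /ball_ /=.
  rewrite -(@ltr_pXn2r _ 2) ?nnegrE //; last exact: ltW.
  have := bound N n; have := emon _ _ hn.
  move: hN; rewrite /= -/(e N) ltr_pdivlMr ?mulr_gt0 // => hN.
  have := e0 n; nra.
have cv : cvg (f @ \oo) by apply: cauchy_cvg; apply: cauchy_exP.
set b := lim (f @ \oo) in cv.
exists b.
  apply: (closed_cvg _ (@closed_closure _ S) _ _ cv).
  by apply: nearW => n; apply: subset_closure; case: (hf n).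
move=> s hs.
have key : forall t : R, `|z - b| <= `|z - b - t *: s|.
  move=> t.
  have c1 : (fun n => `|z - f n|) @ \oo --> `|z - b|.
    by apply: cvg_norm; apply: cvgB => //; exact: cvg_cst.
  have c2 : (fun n => `|(z - t *: s) - f n|) @ \oo --> `|(z - t *: s) - b|.
    by apply: cvg_norm; apply: cvgB => //; exact: cvg_cst.
  have l1 : `|z - b| <= d.
    apply/ler_addgt0Pr => eps eps0; apply: (cvgr_to_le c1).
    apply: filterS (near_infty_natSinv_lt (PosNum eps0)) => n /= hn.
    have := (hf n).2; rewrite /e => h.
    by apply/ltW/(lt_trans h); rewrite ltrD2l.
  have l2 : d <= `|(z - t *: s) - b|.
    apply: (cvgr_to_ge c2); apply: nearW => n.
    rewrite -addrA -opprD; apply: dle; apply: SL => //; exact: (hf n).1.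
  by rewrite addrAC; lra.
set q := z - b in key *.
clearbody q.
set c := ip q s.
pose t := c / (`|s| ^+ 2 + 1).
have hN : 0 < `|s| ^+ 2 + 1 by have := sqr_ge0 `|s|; lra.
have ct : c = t * (`|s| ^+ 2 + 1) by rewrite /t mulfVK // gt_eqF.
have := key t.
rewrite -(@ler_pXn2r _ 2) ?nnegrE // (normB_sq H) (ipZr H) normrZ exprMn.
rewrite -/c ct real_normK ?num_real //.
have := sqr_ge0 `|s|; move=> h1 h2.
have : t ^+ 2 <= 0 by nra.
by move=> ht; rewrite (_ : t = 0) ?mul0r //; nra.
Qed.
End Proj.


Section HC2.
Variables (R : realType).

Lemma subE (V : lmodType R) (x y : V) : x - y = (-1) *: y + x.
Proof. by rewrite scaleN1r addrC. Qed.

Lemma hc_d0 (C : hilbert_complex R) k : hc_d C k 0 = 0.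
Proof.
have := hc_dlin _ C k (-1) 0 0 (hc_dom0 _ C k) (hc_dom0 _ C k).
by rewrite scaler0 addr0 scaleN1r addNr.
Qed.

Lemma hc_domB (C : hilbert_complex R) k x y :
  hc_dom C k x -> hc_dom C k y -> hc_dom C k (x - y).
Proof. by move=> hx hy; rewrite subE; apply: hc_domL. Qed.

Lemma hc_dB (C : hilbert_complex R) k x y :
  hc_dom C k x -> hc_dom C k y -> hc_d C k (x - y) = hc_d C k x - hc_d C k y.
Proof. by move=> hx hy; rewrite !subE hc_dlin. Qed.

Lemma Z0 (C : hilbert_complex R) k : hc_cocycles R C k 0.
Proof. by split; [apply: hc_dom0 | apply: hc_d0]. Qed.

Lemma ZB (C : hilbert_complex R) k x y :
  hc_cocycles R C k x -> hc_cocycles R C k y -> hc_cocycles R C k (x - y).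
Proof.
move=> [hx dx] [hy dy]; split; first exact: hc_domB.
by rewrite hc_dB // dx dy subrr.
Qed.

Lemma B0 (C : hilbert_complex R) k : hc_coboundaries R C k 0.
Proof. by case: k => [|k] //=; exists 0; [apply: hc_dom0 | apply: hc_d0]. Qed.

Lemma BL (C : hilbert_complex R) k (a : R) x y :
  hc_coboundaries R C k x -> hc_coboundaries R C k y ->
  hc_coboundaries R C k (a *: x + y).
Proof.
case: k x y => [|k] x y /=; first by move=> -> ->; rewrite scaler0 addr0.
move=> [u hu <-] [v hv <-]; exists (a *: u + v); first exact: hc_domL.
exact: hc_dlin.
Qed.

Lemma BB (C : hilbert_complex R) k x y :
  hc_coboundaries R C k x -> hc_coboundaries R C k y ->
  hc_coboundaries R C k (x - y).
Proof. by move=> hx hy; rewrite subE; apply: BL. Qed.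

Lemma BZ (C : hilbert_complex R) k x :
  hc_coboundaries R C k x -> hc_cocycles R C k x.
Proof.
case: k x => [|k] x /=; first by move=> ->; apply: Z0.
move=> [u hu <-]; split; [exact: hc_dmap | exact: hc_dd].
Qed.

Lemma Zclosed (C : hilbert_complex R) k : closed (hc_cocycles R C k).
Proof.
have -> : hc_cocycles R C k = (fun x => (x, 0 : hc_space C k.+1)) @^-1`
    [set p : hc_space C k * hc_space C k.+1 | hc_dom C k p.1 /\ hc_d C k p.1 = p.2].
  by apply/seteqP; split => x.
have cf : continuous (fun x : hc_space C k => (x, 0 : hc_space C k.+1)).
  move=> x; rewrite /continuous_at.
  have := @cvg_pair _ _ _ (nbhs x) (nbhs x) (nbhs (0:hc_space C k.+1)) _ _ _ id (fun=> 0) cvg_id (cvg_cst _).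
  exact.
exact: (proj1 (continuous_closedP _) cf _ (hc_closed _ C k)).
Qed.

Lemma clBZ (C : hilbert_complex R) k x :
  closure (hc_coboundaries R C k) x -> hc_cocycles R C k x.
Proof.
apply: (@cl_map _ _ id (hc_coboundaries R C k)); [by move=> y; exact: cvg_id | exact: Zclosed | exact: BZ].
Qed.

Lemma clBB (C : hilbert_complex R) k x y :
  closure (hc_coboundaries R C k) x -> closure (hc_coboundaries R C k) y ->
  closure (hc_coboundaries R C k) (x - y).
Proof. by apply: cl_sub; apply: BB. Qed.

Section Morph.
Variables (C C' : hilbert_complex R) (f : forall k, hc_space C k -> hc_space C' k).
Hypothesis hf : hc_morphism R C C' f.

Lemma mf0 k : f k 0 = 0.
Proof.
have [lin _] := hf k; have := lin (-1) 0 0.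
by rewrite scaler0 addr0 scaleN1r addNr.
Qed.

Lemma mfB k x y : f k (x - y) = f k x - f k y.
Proof. by have [lin _] := hf k; rewrite !subE lin. Qed.

Lemma mfZ k z : hc_cocycles R C k z -> hc_cocycles R C' k (f k z).
Proof.
have [_ [_ [dm dc]]] := hf k.
move=> [hz dz]; split; first exact: dm.
by rewrite dc // dz mf0.
Qed.

Lemma mfB' k b : hc_coboundaries R C k b -> hc_coboundaries R C' k (f k b).
Proof.
case: k b => [|k] b /=; first by move=> ->; rewrite mf0.
have [_ [_ [dm dc]]] := hf k.
by move=> [u hu <-]; exists (f k u); [exact: dm | exact: dc].
Qed.

Lemma mfclB k b : closure (hc_coboundaries R C k) b ->
  closure (hc_coboundaries R C' k) (f k b).
Proof.
have [_ [cf _]] := hf k.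
by apply: cl_map2 => //; apply: mfB'.
Qed.

End Morph.
End HC2.

Unset Implicit Arguments.


Theorem mainTheorem3 (R : realType) (C Ch : hilbert_complex R)
    (ih : forall k, hc_space Ch k -> hc_space C k)
    (pih : forall k, hc_space C k -> hc_space Ch k) :
  hc_morphism R Ch C ih -> hc_morphism R C Ch pih ->
  (forall k (x : hc_space Ch k), pih k (ih k x) = x) ->
  (forall k (q : hc_space C k), hc_harmonic R C k q -> q <> 0 ->
     `|q - ih k (pih k q)| < `|q|) ->
  forall k,
    induces_reduced_cohomology_iso R C Ch k (pih k) /\
    induces_reduced_cohomology_iso R Ch C k (ih k) /\
    (* the map induced by ih is the inverse of the one induced by pih *)
    (forall z, hc_cocycles R C k z ->
       closure (hc_coboundaries R C k) (ih k (pih k z) - z)).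
Proof.
move=> hi hp pi_i hq k.
have inj : forall z, hc_cocycles R C k z ->
    closure (hc_coboundaries R Ch k) (pih k z) ->
    closure (hc_coboundaries R C k) z.
  move=> z hz hpz.
  have [b hb horth] := projection (hc_ipP _ C k) (hc_coboundaries R C k) (B0 C k) (@BL _ C k) z.
  have [q0|qn0] := eqVneq (z - b) 0.
    by move/eqP: q0; rewrite subr_eq0 => /eqP ->.
  exfalso.
  set q := z - b in qn0 horth *.
  have qdef : q = z - b by [].
  clearbody q.
  have hqH : hc_harmonic R C k q by split => //; rewrite qdef; apply: ZB => //; exact: clBZ.
  have lt := hq k q hqH (elimN eqP qn0).
  have c_in : closure (hc_coboundaries R C k) (ih k (pih k q)).
    apply: (mfclB hi); rewrite qdef (mfB hp); apply: clBB => //; exact: (mfclB hp).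
  have : `|q| <= `|q - ih k (pih k q)|.
    apply: (@cl_map _ _ (fun y => `|q - y|) (hc_coboundaries R C k) [set r | `|q| <= r] _ _ _ _ c_in).
    - by move=> y; apply: cvg_norm; apply: cvgB; [exact: cvg_cst | exact: cvg_id].
    - exact: closed_ge.
    - move=> s hs /=.
      rewrite -(@ler_pXn2r _ 2) ?nnegrE // (normB_sq (hc_ipP _ C k)) horth //.
      by have := sqr_ge0 `|s|; lra.
  by lra.
have c0 : forall (D : hilbert_complex R) k, closure (hc_coboundaries R D k) 0.
  by move=> D k'; apply: subset_closure; apply: B0.
split; [|split].
- split; first exact: (mfZ hp).
  split; first exact: (mfclB hp).
  split; first exact: inj.
  move=> z' hz'; exists (ih k z'); first exact: (mfZ hi).
  by rewrite pi_i subrr.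
- split; first exact: (mfZ hi).
  split; first exact: (mfclB hi).
  split.
    by move=> z' hz' hc; rewrite -[z'](pi_i k); exact: (mfclB hp).
  move=> z hz; exists (pih k z); first exact: (mfZ hp).
  apply: inj; first by apply: ZB => //; apply: (mfZ hi); apply: (mfZ hp).
  by rewrite (mfB hp) pi_i subrr.
- move=> z hz; apply: inj; first by apply: ZB => //; apply: (mfZ hi); apply: (mfZ hp).
  by rewrite (mfB hp) pi_i subrr.
Qed.
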